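(* Let $\mathbb{X},\mathbb{Y}$ be finite-dimensional Banach spaces and let $T\in\mathbb{L}(\mathbb{X},\mathbb{Y})$ with $\|T\|=1$. Then $T$ is $k$-smooth if and only if its adjoint $T^*\in\mathbb{L}(\mathbb{Y}^*,\mathbb{X}^* )$ is $k$-smooth.
   Context: $\mathbb{L}(\mathbb{X},\mathbb{Y})$ is the space of linear operators with the operator norm. For a Banach space $\mathbb{Z}$ and a unit vector $z$, $J(z)=\{f\in \mathbb{Z}^*:\|f\|=1,\ f(z)=1\}$; $z$ is $k$-smooth if $\dim\operatorname{span} J(z)=k$. An operator of norm one is $k$-smooth if it is a $k$-smooth point of the unit sphere of the corresponding operator space. *)

(* Defs.v *)
(* finite-dimensional real normed spaces as vectType R with a norm function. *)
From HB Require Import structures.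
From mathcomp Require Import all_boot all_order all_algebra.
From mathcomp Require Import classical_sets reals.
Set Implicit Arguments. Unset Strict Implicit. Unset Printing Implicit Defensive.
Import Order.TTheory GRing.Theory Num.Theory.
Local Open Scope ring_scope.
Local Open Scope classical_set_scope.

Definition is_norm (R : realType) (V : vectType R) (N : V -> R) : Prop :=
  [/\ forall x y : V, N (x + y) <= N x + N y,
      forall (a : R) (x : V), N (a *: x) = `|a| * N x
    & forall x : V, N x = 0 -> x = 0].

Definition opnorm (R : realType) (U V : vectType R) (NU : U -> R) (NV : V -> R)
  (f : 'Hom(U, V)) : R :=
  sup [set NV (f x) | x in [set x : U | NU x <= 1]].

Definition dualnorm (R : realType) (U : vectType R) (NU : U -> R)
  (g : 'Hom(U, R^o)) : R :=
  opnorm NU (fun r : R^o => `|r : R|) g.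

Definition adjoint (R : realType) (X Y : vectType R) (T : 'Hom(X, Y))
  : 'Hom('Hom(Y, R^o), 'Hom(X, R^o)) :=
  linfun (fun g : 'Hom(Y, R^o) => (g \o T)%VF).

Definition Jset (R : realType) (Z : vectType R) (N : Z -> R) (z : Z)
  : set 'Hom(Z, R^o) :=
  [set f | dualnorm N f = 1 /\ f z = 1].

(* dim span S = k : span S is the span of finitely many elements of S,
   and this subspace has dimension k *)
Definition dim_span_eq (R : realType) (V : vectType R) (S : set V) (k : nat) : Prop :=
  exists s : seq V,
    [/\ forall v, v \in s -> S v,
        forall v, S v -> v \in <<s>>%VS
      & \dim <<s>>%VS = k].

Definition ksmooth (R : realType) (Z : vectType R) (N : Z -> R) (z : Z) (k : nat) : Prop :=
  N z = 1 /\ dim_span_eq (Jset N z) k.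

(* Main.v *)
Require Import Defs.
From HB Require Import structures.
From mathcomp Require Import all_boot all_order all_algebra.
From mathcomp Require Import all_classical all_reals all_analysis.
From mathcomp Require Import lra zify ring.
Import Order.TTheory GRing.Theory Num.Theory.
Import VectorInternalTheory numFieldNormedType.Exports.
Set Implicit Arguments. Unset Strict Implicit. Unset Printing Implicit Defensive.
Local Open Scope ring_scope.
Local Open Scope classical_set_scope.

Definition semi (R : realType) (V : vectType R) (P : V -> R) : Prop :=
  (forall x y, P (x + y) <= P x + P y) /\ (forall (a : R) x, P (a *: x) = `|a| * P x).

Section Semi.
Variables (R : realType) (V : vectType R) (P : V -> R) (hP : semi P).

Lemma semi0 : P 0 = 0.
Proof. by case: hP => _ hZ; rewrite -(scale0r (0 : V)) hZ normr0 mul0r. Qed.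

Lemma semi_ge0 x : 0 <= P x.
Proof.
case: hP => hD hZ.
have := hD x ((-1) *: x); rewrite [P ((-1) *: x)]hZ scaleN1r subrr semi0 normrN normr1 mul1r.
by move=> h; rewrite -(@pmulr_rge0 _ 2) // mulrC mulr_natr mulr2n.
Qed.

Lemma semiN x : P (- x) = P x.
Proof. by case: hP => _ hZ; rewrite -scaleN1r hZ normrN normr1 mul1r. Qed.

Lemma semi_sum (I : Type) (r : seq I) (F : I -> V) :
  P (\sum_(i <- r) F i) <= \sum_(i <- r) P (F i).
Proof.
case: hP => hD _.
apply: (big_ind2 (fun x y => P x <= y)) => //; first by rewrite semi0.
by move=> x1 y1 x2 y2 h1 h2; apply: le_trans (hD _ _) _; apply: lerD.
Qed.

Lemma semi_rev x y : `|P x - P y| <= P (x - y).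
Proof.
case: hP => hD _; rewrite ler_norml.
have h1 := hD (y - x) x; rewrite subrK in h1.
have h2 := hD (x - y) y; rewrite subrK in h2.
have e : P (y - x) = P (x - y) by rewrite -opprB semiN.
rewrite e in h1; apply/andP; split; lra.
Qed.
End Semi.

Lemma coord_le_norm (R : realType) n (a : 'rV[R]_n) j : `|a 0 j| <= `|a|.
Proof. by rewrite [leRHS]/Num.Def.normr /= mx_normrE; apply/bigmax_geP; right; exists (0, j). Qed.

Section Bound.
Variables (R : realType) (V : vectType R).

Lemma rv_ub (P : V -> R) : semi P ->
  exists K, 0 <= K /\ forall a : 'rV[R]_(dim V), P (r2v a) <= K * `|a|.
Proof.
move=> hP; have [hD hZ] := hP.
exists (\sum_(j < dim V) P (r2v 'e_j)); split.
  by apply: sumr_ge0 => j _; apply: semi_ge0.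
move=> a; rewrite {1}(row_sum_delta a) linear_sum /=.
apply: le_trans (semi_sum hP _ _) _.
rewrite mulr_suml; apply: ler_sum => j _.
rewrite linearZ /= hZ mulrC ler_wpM2l ?semi_ge0 //; exact: coord_le_norm.
Qed.
End Bound.

Section Lower.
Variables (R : realType) (V : vectType R) (N : V -> R) (hN : is_norm N).

Lemma norm_semi : semi N.
Proof. by case: hN. Qed.

Lemma nf_cont : continuous (fun a : 'rV[R]_(dim V) => N (r2v a)).
Proof.
have [K [K0 hK]] := rv_ub norm_semi.
move=> x. apply/(@cvgrPdist_le _ _ _ _ (nbhs_filter x)) => e e0.
have ep : 0 < e / (K + 1) by rewrite divr_gt0 // ltr_wpDl.
apply: filterS (nbhsx_ballx x _ ep) => y; rewrite -ball_normE /= => hxy.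
apply: le_trans (semi_rev norm_semi _ _) _.
rewrite -linearB /=; apply: le_trans (hK _) _.
apply: le_trans (_ : (K + 1) * `|x - y| <= e).
  by rewrite ler_wpM2r // lerDl.
by rewrite -ler_pdivlMl ?ltr_wpDl // mulrC ltW.
Qed.

Lemma nf_lb : exists2 c, 0 < c & forall a : 'rV[R]_(dim V), c * `|a| <= N (r2v a).
Proof.
have [[a0 a0n]|] := pselect (exists a : 'rV[R]_(dim V), a != 0); last first.
  move=> h; exists 1 => // a; have -> : a = 0.
    by apply/eqP; apply/negPn/negP => an; apply: h; exists a.
  by rewrite normr0 mulr0 (semi_ge0 norm_semi).
pose A := [set a : 'rV[R]_(dim V) | `|a| = 1].
have A0 : A !=set0.
  exists (`|a0|^-1 *: a0); rewrite /A /= normrZ normfV normr_id mulVf //.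
  by rewrite normr_eq0.
have cA : compact A.
  apply: bounded_closed_compact.
    exists 1; split; first exact: real1.
    by move=> M M1 x /= ->; exact: ltW.
  have := (continuous_closedP (Num.norm : 'rV[R]_(dim V) -> R)).1 (@norm_continuous _ _) _ (@closed_eq R 1).
  by [].
have [c0 c0A hc0] := EVT_min_rV A0 cA (continuous_subspaceT nf_cont).
have c0n : `|c0| = 1 by move: c0A; rewrite inE.
have Nc0 : 0 < N (r2v c0).
  rewrite lt_neqAle (semi_ge0 norm_semi) andbT eq_sym; apply/negP => /eqP.
  case: hN => _ _ h /h /(congr1 v2r); rewrite r2vK linear0 => c00.
  by move: c0n; rewrite c00 normr0 => /eqP; rewrite eq_sym oner_eq0.
exists (N (r2v c0)) => // a.
have [->|an] := eqVneq a 0; first by rewrite normr0 mulr0 (semi_ge0 norm_semi).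
have aA : `|a|^-1 *: a \in A.
  by rewrite inE /A /= normrZ normfV normr_id mulVf // normr_eq0.
have := hc0 _ aA; rewrite linearZ /=; case: hN => _ hZ _; rewrite hZ normfV normr_id.
by rewrite ler_pdivlMl ?normr_gt0 // mulrC.
Qed.

Lemma findim_bound (P : V -> R) : semi P ->
  exists M, 0 <= M /\ forall x, P x <= M * N x.
Proof.
move=> hP; have [K [K0 hK]] := rv_ub hP; have [c c0 hc] := nf_lb.
exists (K / c); split; first by rewrite divr_ge0 // ltW.
move=> x; rewrite -[x in P x]v2rK; apply: le_trans (hK _) _.
rewrite -mulrA ler_wpM2l // ler_pdivlMl // ; rewrite -[x in N x]v2rK; exact: hc.
Qed.
End Lower.

Section Adj.
Variables (R : realType) (X Y : vectType R) (T : 'Hom(X, Y)).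
Definition compT (g : 'Hom(Y, R^o)) : 'Hom(X, R^o) := (g \o T)%VF.
Fact compT_lin : linear compT.
Proof. by move=> a g h; rewrite /compT comp_lfunDl comp_lfunZl. Qed.
HB.instance Definition _ := GRing.isLinear.Build R _ _ _ compT compT_lin.
Lemma adjointE g : adjoint T g = (g \o T)%VF.
Proof. by rewrite /adjoint; change (linfun compT g = compT g); rewrite lfunE. Qed.
End Adj.
Section CF.
Variables (R : realType) (Y : vectType R) (j : 'I_(dim Y)).
Definition cfun (x : Y) : R^o := v2r x 0 j.
Fact cfun_lin : linear cfun.
Proof. by move=> a x y; rewrite /cfun linearP !mxE. Qed.
HB.instance Definition _ := GRing.isLinear.Build R _ _ _ cfun cfun_lin.
Lemma cfunE x : linfun cfun x = v2r x 0 j.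
Proof. by rewrite lfunE. Qed.
End CF.

Section Sep.
Variables (R : realType) (Y : vectType R).

Lemma sep_fun (U : {vspace Y}) v : v \notin U ->
  exists h : 'Hom(Y, R^o), (forall u, u \in U -> h u = 0) /\ h v = 1.
Proof.
move=> vU; set w := v - projv U v.
have w0 : w != 0.
  by apply: contra vU; rewrite subr_eq0 => /eqP ->; exact: memv_proj.
have [j hj] : exists j, v2r w 0 j != 0.
  apply/existsP; apply: contraR w0; rewrite negb_exists => /forallP h0.
  apply/eqP; apply: v2r_inj; rewrite linear0; apply/rowP => j.
  by rewrite mxE; apply/eqP; move: (h0 j); rewrite negbK.
exists ((v2r w 0 j)^-1 *: (linfun (cfun j) \o (\1 - projv U))%VF); split.
  move=> u uU; rewrite scale_lfunE comp_lfunE add_lfunE opp_lfunE id_lfunE.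
  by rewrite cfunE projv_id // subrr linear0 mxE /= scaler0.
rewrite scale_lfunE comp_lfunE add_lfunE opp_lfunE id_lfunE cfunE -/w.
by change ((v2r w 0 j)^-1 * v2r w 0 j = 1); rewrite mulVf.
Qed.
End Sep.

Section HahnBanach.
Variables (R : realType) (Y : vectType R) (N : Y -> R) (hN : is_norm N).

Lemma hb_ext m : forall (U : {vspace Y}) (f : 'Hom(Y, R^o)),
  (\dim {:Y} - \dim U <= m)%N -> (forall u, u \in U -> f u <= N u) ->
  exists g : 'Hom(Y, R^o), (forall u, u \in U -> g u = f u) /\ (forall x, g x <= N x).
Proof.
have [hD hZ hdef] := hN.
have N0 : N 0 = 0 by rewrite semi0 // norm_semi.
elim: m => [|m IH] U f hd hf;
  (have [sub|nsub] := boolP (fullv <= U)%VS;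
   [by exists f; split => // x; apply: hf; exact: (subvP sub) _ (memvf x) | ]).
  exfalso; apply: (negP nsub); rewrite -(geq_leqif (dimv_leqif_sup (subvf U))).
  by move: hd; rewrite leqn0 subn_eq0.
have [v _ vU] := subvPn nsub.
have [h [h0 h1]] := sep_fun vU.
pose S := [set f w - N (w - v) | w in [set w | w \in U]].
have S0 : S !=set0 by exists (f 0 - N (0 - v)); exists 0 => //; exact: mem0v.
have Sub w' : w' \in U -> ubound S (N (w' + v) - f w').
  move=> w'U _ [w wU <-]; rewrite lerBrDr addrAC lerBlDr -linearD /=.
  apply: le_trans (hf _ (memvD wU w'U)) _.
  have e : w - v + (w' + v) = w + w' by rewrite addrACA addNr addr0.
  by have := hD (w - v) (w' + v); rewrite e [X in _ -> _ <= X]addrC.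
have hS : has_sup S by split => //; exists (N (0 + v) - f 0); exact: Sub (mem0v _).
pose c := sup S.
have c_ge w : w \in U -> f w - N (w - v) <= c.
  by move=> wU; apply: sup_upper_bound => //; exists w.
have c_le w : w \in U -> c <= N (w + v) - f w.
  by move=> wU; apply: ge_sup => //; exact: Sub.
pose g' := f + (c - f v) *: h.
have g'E x : g' x = f x + (c - f v) * h x.
  by rewrite add_lfunE scale_lfunE.
pose U' := (U + <[v]>)%VS.
have ltU : (\dim U < \dim U')%N.
  rewrite (ltn_leqif (dimv_leqif_sup (addvSl U <[v]>))); apply/negP => /subvP h'.
  by move: vU; rewrite h' //; apply: (subvP (addvSr U <[v]>)); exact: memv_line.
have hd' : (\dim {:Y} - \dim U' <= m)%N by move: hd ltU; lia.
have hg' : forall x, x \in U' -> g' x <= N x.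
  move=> x /memv_addP [u uU [y /vlineP [t ->] ->]].
  have -> : g' (u + t *: v) = f u + t * c.
    rewrite g'E !linearD !linearZ /= h0 // h1 add0r.
    by rewrite /GRing.scale /=; ring.
  have [->|tn0] := eqVneq t 0.
    by rewrite scale0r addr0 mul0r addr0; exact: hf.
  set A := N (t^-1 *: u + v).
  have NA : N (u + t *: v) = `|t| * A.
    by rewrite /A -hZ scalerDr scalerA mulfV // scale1r.
  have fa : f u = t * f (t^-1 *: u).
    by rewrite linearZ /= [_ *: _]/(_ * _) mulrA mulfV // mul1r.
  set a := f (t^-1 *: u).
  rewrite NA fa -mulrDr.
  case: (ltgtP t 0) => [tn|tp|/eqP]; last by rewrite (negPf tn0).
    rewrite ltr0_norm // mulNr -mulrN ler_nM2l //.
    have := c_ge _ (memvZ (- t^-1) uU).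
    rewrite scaleNr linearN /= -/a -[- _ - v]opprD (semiN (norm_semi hN)) -/A => hh.
    lra.
  rewrite gtr0_norm // ler_pM2l //.
  have := c_le _ (memvZ t^-1 uU); rewrite -/A -/a => hh.
  lra.
have [g [hgU hgN]] := IH U' g' hd' hg'.
exists g; split => // u uU.
by rewrite hgU ?(subvP (addvSl _ _)) // g'E h0 // mulr0 addr0.
Qed.
End HahnBanach.

Lemma hb_norming (R : realType) (Y : vectType R) (N : Y -> R) (hN : is_norm N) (y : Y) :
  exists g : 'Hom(Y, R^o), (forall z, `|g z| <= N z) /\ g y = N y.
Proof.
have hS := norm_semi hN; have [hD hZ hdef] := hN.
have [->|y0] := eqVneq y 0.
  exists 0; split; last by rewrite zero_lfunE semi0.
  by move=> z; rewrite zero_lfunE normr0 semi_ge0.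
have [h [_ h1]] : exists h : 'Hom(Y, R^o), (forall u, u \in 0%VS -> h u = 0) /\ h y = 1.
  by apply: sep_fun; rewrite memv0.
have [g [hgU hgN]] : exists g : 'Hom(Y, R^o),
    (forall u, u \in <[y]>%VS -> g u = (N y *: h) u) /\ (forall x, g x <= N x).
  apply: (@hb_ext _ _ _ hN (\dim {:Y})); first exact: leq_subr.
  move=> u /vlineP [t ->]; rewrite scale_lfunE linearZ /= h1 hZ.
  rewrite /GRing.scale /= mulr1 mulrC ler_wpM2r ?semi_ge0 //; exact: ler_norm.
exists g; split.
  move=> z; rewrite ler_norml hgN andbT lerNl -linearN /=.
  by apply: le_trans (hgN _) _; rewrite semiN.
by rewrite hgU ?memv_line // scale_lfunE h1 /GRing.scale /= mulr1.
Qed.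

Section Opnorm.
Variables (R : realType) (U V : vectType R) (NU : U -> R) (NV : V -> R).

Lemma opnorm_lub (S : 'Hom(U, V)) M : NU 0 <= 1 ->
  (forall x, NU x <= 1 -> NV (S x) <= M) -> opnorm NU NV S <= M.
Proof.
move=> h0 hM; apply: ge_sup; first by exists (NV (S 0)); exists 0.
by move=> _ [x hx <-]; exact: hM.
Qed.

Lemma opnorm_ge' (S : 'Hom(U, V)) M :
  (forall x, NU x <= 1 -> NV (S x) <= M) ->
  forall x, NU x <= 1 -> NV (S x) <= opnorm NU NV S.
Proof.
move=> hM x hx; apply: sup_upper_bound; last by exists x.
split; first by exists (NV (S x)); exists x.
by exists M => _ [z hz <-]; exact: hM.
Qed.

Hypotheses (hU : is_norm NU) (hV : semi NV).

Lemma opnorm_bnd (S : 'Hom(U, V)) : exists M, forall x, NU x <= 1 -> NV (S x) <= M.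
Proof.
have hP : semi (fun x => NV (S x)).
  case: hV => hD hZ; split => [x y|a x]; first by rewrite linearD; apply: hD.
  by rewrite linearZ; apply: hZ.
have [M [M0 hM]] := findim_bound hU hP.
exists M => x hx; apply: le_trans (hM x) _.
by rewrite ler_piMr.
Qed.

Lemma opnorm_ge (S : 'Hom(U, V)) x : NU x <= 1 -> NV (S x) <= opnorm NU NV S.
Proof. move=> hx; have [M hM] := opnorm_bnd S; exact: (opnorm_ge' hM hx). Qed.

Lemma opnorm_ge0 (S : 'Hom(U, V)) : 0 <= opnorm NU NV S.
Proof.
have h0 : NU 0 <= 1 by rewrite (semi0 (norm_semi hU)).
by apply: le_trans (opnorm_ge S h0); rewrite linear0 (semi0 hV).
Qed.

Lemma opnorm_ub (S : 'Hom(U, V)) x : NV (S x) <= opnorm NU NV S * NU x.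
Proof.
have hUs := norm_semi hU; have [_ hZ hdef] := hU.
have [->|x0] := eqVneq x 0.
  by rewrite linear0 (semi0 hV) (semi0 hUs) mulr0.
have Nx : 0 < NU x.
  rewrite lt_neqAle (semi_ge0 hUs) andbT eq_sym; apply/negP => /eqP /hdef.
  by apply/eqP.
have Nx' : 0 <= (NU x)^-1 by rewrite invr_ge0 ltW.
have h1 : NU ((NU x)^-1 *: x) <= 1.
  by rewrite hZ (ger0_norm Nx') mulVf // gt_eqF.
have := opnorm_ge S h1; rewrite linearZ /=.
case: hV => _ hZV; rewrite hZV (ger0_norm Nx').
by rewrite ler_pdivrMl // mulrC.
Qed.
End Opnorm.

Lemma abs_semi (R : realType) : semi (fun r : R^o => `|r : R|).
Proof. by split => [x y|a x]; [exact: ler_normD | rewrite /GRing.scale /= normrM]. Qed.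

Section Transfer.
Variables (R : realType) (D E : vectType R) (ND : D -> R) (NE : E -> R).
Variables (Phi : 'Hom(D, E)) (Psi : 'Hom(E, D)).
Hypotheses (hPP : forall e, Phi (Psi e) = e) (hPs : forall d, Psi (Phi d) = d).
Hypothesis hiso : forall d, NE (Phi d) = ND d.

Lemma dual_comp (f : 'Hom(D, R^o)) : dualnorm NE (f \o Psi)%VF = dualnorm ND f.
Proof.
rewrite /dualnorm /opnorm; congr sup; apply/seteqP; split.
  move=> _ [e he <-]; exists (Psi e); last by rewrite comp_lfunE.
  by rewrite /= -hiso hPP.
move=> _ [d hd <-]; exists (Phi d); last by rewrite comp_lfunE hPs.
by rewrite /= hiso.
Qed.

Lemma ksmooth_transfer d k : ksmooth ND d k -> ksmooth NE (Phi d) k.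
Proof.
case=> hn [s [hs hspan hdim]]; split; first by rewrite hiso.
pose L : 'Hom('Hom(D, R^o), 'Hom(E, R^o)) := linfun (compT Psi).
have LE f : L f = (f \o Psi)%VF by rewrite /L lfunE.
have Linj : injective L.
  move=> f f' /(congr1 (fun h : 'Hom(E, R^o) => (h \o Phi)%VF)).
  rewrite !LE => e; apply/lfunP => x; move/lfunP: e => /(_ x).
  by rewrite !comp_lfunE hPs.
have Lker : lker L == 0%VS by apply/lker0P.
exists (map L s); split.
- move=> v /mapP [f fs ->]; have [h1 h2] := hs f fs; rewrite /Jset /=.
  by rewrite LE dual_comp comp_lfunE hPs.
- move=> phi [h1 h2].
  have -> : phi = L (phi \o Phi)%VF.
    by rewrite LE; apply/lfunP => e; rewrite !comp_lfunE hPP.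
  rewrite -limg_span; apply: memv_img; apply: hspan; split.
    rewrite -dual_comp; have -> // : ((phi \o Phi) \o Psi)%VF = phi.
    by apply/lfunP => x; rewrite !comp_lfunE hPP.
  by rewrite comp_lfunE.
- by rewrite -limg_span limg_dim_eq // (eqP Lker) capv0.
Qed.
End Transfer.

Section Main.
Variables (R : realType) (X Y : vectType R) (NX : X -> R) (NY : Y -> R).
Hypotheses (hX : is_norm NX) (hY : is_norm NY).

Lemma NX0 : NX 0 <= 1. Proof. by rewrite (semi0 (norm_semi hX)). Qed.
Lemma NY0 : NY 0 <= 1. Proof. by rewrite (semi0 (norm_semi hY)). Qed.

Lemma adj_part1 (S : 'Hom(X, Y)) (g : 'Hom(Y, R^o)) : dualnorm NY g <= 1 ->
  dualnorm NX (adjoint S g) <= opnorm NX NY S.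
Proof.
move=> hg; rewrite adjointE; apply: opnorm_lub NX0 _ => x hx.
rewrite comp_lfunE; apply: le_trans (opnorm_ub hY (@abs_semi R) g (S x)) _.
apply: le_trans (opnorm_ge hX (norm_semi hY) S hx).
by rewrite ler_piMl // (semi_ge0 (norm_semi hY)).
Qed.

Lemma dY0 : dualnorm NY 0 <= 1.
Proof.
apply: opnorm_lub NY0 _ => z _; rewrite zero_lfunE normr0; exact: ler01.
Qed.

Lemma adj_iso (S : 'Hom(X, Y)) :
  opnorm (dualnorm NY) (dualnorm NX) (adjoint S) = opnorm NX NY S.
Proof.
apply/eqP; rewrite eq_le; apply/andP; split.
  by apply: opnorm_lub dY0 _ => g hg; exact: adj_part1.
apply: opnorm_lub NX0 _ => x hx.
have [g [hg1 hg2]] := hb_norming hY (S x).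
have hg : dualnorm NY g <= 1.
  by apply: opnorm_lub NY0 _ => z hz; apply: le_trans (hg1 z) hz.
rewrite -hg2; apply: le_trans (ler_norm _) _.
have -> : g (S x) = adjoint S g x by rewrite adjointE comp_lfunE.
apply: le_trans (opnorm_ge hX (@abs_semi R) _ hx) _.
exact: (opnorm_ge' (adj_part1 S) hg).
Qed.
End Main.

Section AdjLin.
Variables (R : realType) (X Y : vectType R).
Definition adjf (S : 'Hom(X, Y)) := adjoint S.
Fact adjf_lin : linear adjf.
Proof.
move=> a S S'; apply/lfunP => g.
by rewrite add_lfunE scale_lfunE /adjf !adjointE comp_lfunDr comp_lfunZr.
Qed.
HB.instance Definition _ := GRing.isLinear.Build R _ _ _ adjf adjf_lin.
End AdjLin.

Unset Implicit Arguments.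

Theorem proposition3p7 (R : realType) (X Y : vectType R)
  (NX : X -> R) (NY : Y -> R) (hX : is_norm NX) (hY : is_norm NY)
  (T : 'Hom(X, Y)) (k : nat) :
  opnorm NX NY T = 1 ->
  (ksmooth (opnorm NX NY) T k <->
   ksmooth (opnorm (dualnorm NY) (dualnorm NX)) (adjoint T) k).
Proof.
move=> _.
pose Phi : 'Hom('Hom(X, Y), 'Hom('Hom(Y, R^o), 'Hom(X, R^o))) := linfun (@adjf R X Y).
have PhiE S : Phi S = adjoint S by rewrite /Phi lfunE.
have Phiinj : injective Phi.
  move=> S S'; rewrite !PhiE => e; apply/lfunP => x; apply/eqP; rewrite -subr_eq0.
  have [g [_ hg]] := hb_norming hY (S x - S' x).
  have := congr1 (fun h : 'Hom('Hom(Y, R^o), 'Hom(X, R^o)) => h g x) e; rewrite !adjointE !comp_lfunE => e'.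
  have [_ _ hdef] := hY; apply/eqP/hdef; rewrite -hg linearB /= e' subrr //.
have Pker : lker Phi == 0%VS by apply/lker0P.
have Pimg : limg Phi = fullv.
  apply/eqP; rewrite eqEdim subvf /= limg_dim_eq ?(eqP Pker) ?capv0 //.
  have dH (A B : vectType R) : dim 'Hom(A, B) = (dim A * dim B)%N by [].
  have dR : dim (R^o : vectType R) = 1%N by [].
  by rewrite !dimvf !dH dR !muln1 mulnC.
pose Psi := (Phi^-1)%VF.
have hPs S : Psi (Phi S) = S by apply: lker0_lfunK.
have hPP e : Phi (Psi e) = e by apply: limg_lfunVK; rewrite Pimg memvf.
have hiso S : opnorm (dualnorm NY) (dualnorm NX) (Phi S) = opnorm NX NY S.
  by rewrite PhiE adj_iso.
have hiso' e : opnorm NX NY (Psi e) = opnorm (dualnorm NY) (dualnorm NX) e.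
  by rewrite -hiso hPP.
split => h.
  by rewrite -PhiE; exact: (ksmooth_transfer hPP hPs hiso).
rewrite -[T]hPs; apply: (ksmooth_transfer hPs hPP hiso').
by rewrite PhiE.
Qed.
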